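(* Let $n>2$, $V=\mathbb{F}_2^n$, let $g\in\mathrm{Sym}(V)$ and let $W\le V$ be such that $\sigma_W=T\cap T^g$. If $\dim(W)=n-2$, then $T^g<\mathrm{AGL}(V)$.
   Context: $T=\{\sigma_v: v\in V\}\le\mathrm{Sym}(V)$ is the group of translations $\sigma_v:x\mapsto x+v$; $\sigma_W=\{\sigma_w:w\in W\}$; $T^g=g^{-1}Tg$. $\mathrm{AGL}(V)$ is the affine group of maps $x\mapsto xL+v$, $L\in\mathrm{GL}(V)$, $v\in V$ (the normaliser of $T$ in $\mathrm{Sym}(V)$). *)

(* Defs.v *)
From HB Require Import structures.
From mathcomp Require Import all_boot all_order all_algebra all_fingroup.
Set Implicit Arguments. Unset Strict Implicit. Unset Printing Implicit Defensive.
Import GRing.Theory.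
Local Open Scope ring_scope.

Notation V n := 'rV['F_2]_n.

Definition transl (n : nat) (v : V n) : {perm V n} := perm (addIr v).

Definition Tgrp (n : nat) : {set {perm V n}} := [set transl v | v : V n].

Definition sigmaW (n : nat) (W : {vspace V n}) : {set {perm V n}} :=
  [set transl w | w in (W : {pred V n})].

Definition AGL (n : nat) : {set {perm V n}} :=
  [set p : {perm V n} | [exists L : 'M['F_2]_n, [exists v : V n,
      (L \in unitmx) && [forall x : V n, p x == x *m L + v]]]].

(* Main.v *)
Set Warnings "-notation-overridden,-ambiguous-paths".
Require Import Defs.
From HB Require Import structures.
From mathcomp Require Import all_boot all_order all_algebra all_fingroup.
From mathcomp Require Import zify.
Set Implicit Arguments. Unset Strict Implicit. Unset Printing Implicit Defensive.
Import GRing.Theory.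
Local Open Scope ring_scope.

Lemma F2add (b : 'F_2) : b + b = 0.
Proof. case: b => [[|[|//]]] ? ; by apply/val_inj. Qed.
Lemma F2cases (b : 'F_2) : b = 0 \/ b = 1.
Proof. case: b => [[|[|//]]] ? ; [left|right]; by apply/val_inj. Qed.

Section Key.
Variable n : nat.
Local Notation VV := 'rV['F_2]_n.

Lemma vadd (x : VV) : x + x = 0.
Proof. by apply/rowP => j; rewrite !mxE F2add. Qed.

Lemma addKv (x y : VV) : x + y + y = x.
Proof. by rewrite -addrA vadd addr0. Qed.

Lemma addvK (x y : VV) : y + (y + x) = x.
Proof. by rewrite addrA vadd add0r. Qed.

Lemma scale0F2 (x : VV) : (0 : 'F_2) *: x = 0.
Proof. by apply/rowP => j; rewrite !mxE mul0r. Qed.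
Lemma scale1F2 (x : VV) : (1 : 'F_2) *: x = x.
Proof. by apply/rowP => j; rewrite !mxE mul1r. Qed.

Lemma scaleF2 (k : 'F_2) (x : VV) : k *: x = 0 \/ k *: x = x.
Proof.
by case: (F2cases k) => ->; [left; rewrite scale0F2 | right; rewrite scale1F2].
Qed.

Lemma dim_add_line (U : {vspace VV}) v : v \notin U -> \dim (U + <[v]>) = (\dim U).+1.
Proof.
move=> vU.
case: (dimv_leqif_sup (addvSl U <[v]>)) => le1 eq1.
have h2 : ~~ (U + <[v]> <= U)%VS.
  apply: contra vU => s; apply: (subvP s); apply: (subvP (addvSr U <[v]>)).
  exact: memv_line.
have lt1 : (\dim U < \dim (U + <[v]>))%N by rewrite ltn_neqAle eq1 (negbTE h2) le1.
case: (dimv_add_leqif U <[v]>) => le2 _.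
rewrite dim_vline in le2.
move: (v != 0) le2 => b le2.
case: b le2 => /= le2; lia.
Qed.

Lemma index2 (M : {vspace VV}) a b : \dim M = n.-1 -> (0 < n)%N ->
  a \notin M -> b \notin M -> a + b \in M.
Proof.
move=> dM n0 aM bM.
have full : (M + <[a]>)%VS = fullv.
  apply/eqP; rewrite eqEdim subvf dimvf dim_matrix dim_add_line // dM /=. lia.
have : b \in (M + <[a]>)%VS by rewrite full memvf.
move=> /memv_addP [m mM [c /vlineP [k ->] bE]]; move: bM; rewrite bE.
case: (scaleF2 k a) => ->.
  by rewrite addr0 mM.
by rewrite addrC addvK.
Qed.


Lemma key (W : {vspace VV}) (p : VV -> VV) :
  (2 < n)%N -> \dim W = (n - 2)%N ->
  (forall x, p (p x) = x) ->
  (forall w x, w \in W -> p (x + w) = p x + w) ->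
  (forall x y, p x + x \in W -> p y + y = p x + x) ->
  forall x y, p (x + y) + p 0 = p x + p y.
Proof.
move=> n2 dW hinv hW hreg.
pose d x := p x + x.
have dE : forall z, d z = p z + z by [].
clearbody d.
have pE : forall z, p z = d z + z by move=> z; rewrite dE addKv.
suff h : forall x y, d (x + y) + d 0 = d x + d y.
  move=> x y; rewrite (pE (x + y)) (pE 0) (pE x) (pE y) addrACA h addr0 addrACA //.
have [ex|nex] := boolP [exists x, d x \in W].
  case/existsP: ex => x0 hx0 x y.
  by rewrite !dE !(hreg x0) -?dE // vadd vadd.
move/existsPn: nex => nex.
pose u := d 0.
have uW : u \notin W by apply: nex.
have p0 : p 0 = u by rewrite /u dE addr0.
clearbody u.
have d0 : d 0 = u by rewrite dE addr0.
pose M := (W + <[u]>)%VS.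
have memM : forall m, m \in M -> m \in W \/ m + u \in W.
  move=> m /memv_addP [w wW [c /vlineP [k ->] ->]].
  case: (scaleF2 k u) => ->; first by left; rewrite addr0.
  by right; rewrite addKv.
have MW : forall m, m \in W -> m \in M.
  by move=> m mW; apply: (subvP (addvSl W <[u]>)).
have MWu : forall m, m + u \in W -> m \in M.
  move=> m mW; rewrite -(addKv m u); apply/memv_addP; exists (m + u) => //.
  by exists u => //; apply: memv_line.
have uM : u \in M by apply: MWu; rewrite vadd mem0v.
have dM : \dim M = n.-1 by rewrite /M dim_add_line // dW; lia.
have S1 : forall x w, w \in W -> d (x + w) = d x.
  by move=> x w wW; rewrite !dE hW // addrACA vadd addr0.
have S2 : forall x, d (p x) = d x by move=> x; rewrite !dE hinv addrC.
have pE' : forall x, p x = x + d x by move=> x; rewrite addrC -pE.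
have S3a : forall x, x \in M -> d x = u.
  move=> x /memM [xW|xuW].
    by rewrite -[x]add0r S1 // d0.
  have -> : x = p 0 + (x + u) by rewrite p0 addrC addKv.
  by rewrite S1 // S2 d0.
have S3 : forall x, d x + u \in W.
  move=> x; have [xM|xM] := boolP (x \in M).
    by rewrite S3a // vadd mem0v.
  have [sM|sM] := boolP (d x \in M).
    by case/memM: sM => // sW; move: (nex x); rewrite sW.
  have := index2 dM (ltnW (ltnW n2)) xM sM.
  rewrite -pE' => /S3a; rewrite S2 => dxu.
  by move: sM; rewrite dxu uM.
have S4 : forall x y, x + y \in M -> d x = d y.
  move=> x y /memM [xyW|xyuW].
    by rewrite -(addvK y x) S1.
  have -> : y = p x + ((d x + u) + (x + y + u)).
    by rewrite pE' (addrC (d x + u)) -(addrA x y u) addrACA !addvK addKv.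
  by rewrite S1 ?S2 // memvD.
move=> x y.
have [xM|xM] := boolP (x \in M).
  have e1 : d x = d 0 by apply: S4; rewrite addr0.
  have e2 : d (x + y) = d y by apply: S4; rewrite -addrA vadd addr0.
  by rewrite e1 e2 addrC.
have [yM|yM] := boolP (y \in M).
  have e1 : d y = d 0 by apply: S4; rewrite addr0.
  have e2 : d (x + y) = d x by apply: S4; rewrite addrC addrA vadd add0r.
  by rewrite e1 e2.
have xyM := index2 dM (ltnW (ltnW n2)) xM yM.
have e1 : d (x + y) = d 0 by apply: S4; rewrite addr0.
have e2 : d x = d y by apply: S4.
by rewrite e1 e2 !vadd.
Qed.

End Key.

Section Main.
Variable n : nat.
Local Notation VV := 'rV['F_2]_n.

Lemma conjE (g : {perm VV}) v x : ((transl v) ^ g)%g x = g (g^-1%g x + v).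
Proof. by rewrite /conjg !permM /transl permE. Qed.

Lemma conj_reg (g : {perm VV}) v1 v2 x :
  ((transl v1) ^ g)%g x = ((transl v2) ^ g)%g x -> v1 = v2.
Proof. by rewrite !conjE => /perm_inj /addrI. Qed.

Lemma affine_in_AGL (p : {perm VV}) :
  (forall x y, p (x + y) + p 0 = p x + p y) -> p \in AGL n.
Proof.
move=> hadd.
pose a x := p x + p 0.
have aE : forall x, a x = p x + p 0 by [].
clearbody a.
have aD : forall x y, a (x + y) = a x + a y.
  by move=> x y; rewrite !aE hadd addrACA vadd addr0.
have a0 : a 0 = 0 by rewrite aE vadd.
have aZ : forall (k : 'F_2) v, a (k *: v) = k *: a v.
  move=> k v; case: (F2cases k) => ->; first by rewrite !scale0F2 a0.
  by rewrite !scale1F2.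
pose L : 'M['F_2]_n := \matrix_(i, j) a (delta_mx 0 i) 0 j.
have aL : forall x, a x = x *m L.
  move=> x; rewrite mulmx_sum_row {1}(row_sum_delta x).
  rewrite (big_morph a aD a0); apply: eq_bigr => i _; rewrite aZ; congr (_ *: _).
  by apply/rowP => j; rewrite !mxE.
have pL : forall x, p x = x *m L + p 0 by move=> x; rewrite -aL aE addKv.
have uL : L \in unitmx.
  rewrite -row_free_unit; apply: inj_row_free => v hv.
  apply: (@perm_inj _ p); rewrite pL hv add0r.
  by rewrite pL mul0mx add0r.
rewrite inE; apply/existsP; exists L; apply/existsP; exists (p 0).
by rewrite uL /=; apply/forallP => x; rewrite pL.
Qed.
End Main.

Lemma conj_comm n (g : {perm 'rV['F_2]_n}) v1 v2 x :
  ((transl v1) ^ g)%g (((transl v2) ^ g)%g x) = ((transl v2) ^ g)%g (((transl v1) ^ g)%g x).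
Proof. by rewrite !conjE !permK -!addrA (addrC v1). Qed.

Lemma transl_AGL n (v : 'rV['F_2]_n) : transl v \in AGL n.
Proof.
apply: affine_in_AGL => x y; rewrite /transl !permE add0r addKv.
by rewrite addrACA vadd addr0.
Qed.

Lemma T_proper_AGL n : (1 < n)%N -> Tgrp n \proper AGL n.
Proof.
move=> n1.
have n0 : (0 < n)%N by apply: ltnW.
pose i0 : 'I_n := Ordinal n0.
pose i1 : 'I_n := Ordinal n1.
pose P : 'M['F_2]_n := perm_mx (tperm i0 i1).
have inj : injective (fun x : 'rV['F_2]_n => x *m P).
  have fr : row_free P by rewrite row_free_unit unitmx_perm.
  move=> x y; exact: (row_free_inj fr).
pose q := perm inj.
apply/properP; split.
  by apply/subsetP => t /imsetP [v _ ->]; apply: transl_AGL.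
exists q.
  apply: affine_in_AGL => x y; rewrite !permE mulmxDl mul0mx addr0 //.
apply/negP => /imsetP [v _ e].
have v0 : v = 0.
  have := congr1 (fun f : {perm _} => f 0) e; rewrite /= /transl !permE mul0mx add0r.
  by move=> ->.
have := congr1 (fun f : {perm _} => f (delta_mx 0 i0) 0 i1) e.
rewrite /= /transl !permE v0 addr0 -rowE !mxE tpermL eqxx /=.
by move/eqP; rewrite oner_eq0.
Qed.

Theorem mainTheorem7 (n : nat) (g : {perm 'rV['F_2]_n}) (W : {vspace 'rV['F_2]_n}) :
  (2 < n)%N ->
  sigmaW W = Tgrp n :&: (Tgrp n :^ g)%g ->
  \dim W = (n - 2)%N ->
  (Tgrp n :^ g)%g \proper AGL n.
Proof.
move=> n2 hS dW.
have inG : forall w, w \in W -> exists v, transl w = (transl v ^ g)%g.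
  move=> w wW.
  have : transl w \in sigmaW W by apply: imset_f.
  rewrite hS => /setIP [_ /imsetP [t /imsetP [v _ ->] ->]].
  by exists v.
have sub : (Tgrp n :^ g \subset AGL n)%g.
  apply/subsetP => q /imsetP [t /imsetP [v _ ->] ->].
  apply: affine_in_AGL; apply: (key n2 dW).
  - by move=> x; rewrite !conjE permK addKv permKV.
  - move=> w x wW; have [v' ev] := inG w wW.
    have e : forall y, y + w = (transl v' ^ g)%g y by move=> y; rewrite -ev /transl permE.
    by rewrite !e conj_comm.
  - move=> x y hx; have [v' ev] := inG _ hx.
    have e : forall z, (transl v' ^ g)%g z = z + ((transl v ^ g)%g x + x).
      by move=> z; rewrite -ev /transl permE.
    have vv : v' = v by apply: (@conj_reg _ g v' v x); rewrite e addrC addKv.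
    by rewrite -{1}vv e addrC addvK.
rewrite properEcard sub /= cardJg.
apply: proper_card; apply: T_proper_AGL; exact: ltnW.
Qed.
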